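(* Let $\ell$ be an integer with $1<\ell<\infty$. Then under $T_\ell$: (1) for every $k\ge1$ the word $F_k$ is a soliton of speed $\min(\ell,k)$, i.e. $T_\ell$ maps $F_k$ at $p$ to $F_k$ at $p+\min(\ell,k)$; (2) for every slow basic soliton $A$ (a nonempty word in the letters $F,B_a,U_a$, $a\ge1$, containing neither $FF$ nor $FU_a$ consecutively), $T_\ell$ maps $A$ at $p$ to $A$ at $p+1$, i.e. it acts exactly as $T_\infty$ does.
   Context: Box-basket-ball system. A site state is a triple $(a,b,c)$ of nonnegative integers with $a=b-c+1$ (one box, $b$ baskets, $c$ balls). $V=(1,0,0)$, $F=(0,0,1)$, $B_a=(a+1,a,0)$, $U_a=(a,a,1)$ ($a\ge1$), $F_k=F\cdots F$ ($k$ letters). A state is a sequence $(S_i)_{i\in\mathbb Z}$ of site states, all but finitely many equal to $V$. For a word $A=A_1\cdots A_n$, ''$A$ at $p$'' is the state with $S_{p+j-1}=A_j$ ($1\le j\le n$), vacuum elsewhere. The map $R$: for a carrier $(a,b,c)$ and site $(d,e,f)$, $R$ produces a site $(d',e',f')$ and carrier $(a',b',c')$ with $d'=d+\min(a+b,a+c,b+f)-\min(e+c,d+c,d+b)$, $e'=e+\min(a+b,a+c,b+f)-\min(a+e,d+f,e+f)$, $f'=f+\min(e+c,d+c,d+b)-\min(a+e,d+f,e+f)$, $a'=a-\min(a+b,a+c,b+f)+\min(e+c,d+c,d+b)$, $b'=b-\min(a+b,a+c,b+f)+\min(a+e,d+f,e+f)$, $c'=c-\min(e+c,d+c,d+b)+\min(a+e,d+f,e+f)$.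 Time evolution $T_\ell$ (integer $\ell\ge1$): a carrier starting in state $u_\ell=(\ell,0,0)$ at the far left passes the sites from left to right, each site being updated by $R$; the new state consists of the updated sites. Time evolution $T_\infty$: same with carrier initially $(\infty,0,0)$, where the formulas become $d'=d+b+f-\min(e+c,d+c,d+b)$, $e'=e+b-\min(d,e)$, $f'=\min(e+c,d+c,d+b)-\min(d,e)$, $b'=\min(d,e)$, $c'=c+f+\min(d,e)-\min(e+c,d+c,d+b)$, $a'=\infty$. *)

(* Defs.v *)
From Stdlib Require Import ZArith List Bool.
Import ListNotations.
Open Scope Z_scope.

(* A site state / carrier state (a,b,c). Arithmetic is done in Z so that the
   update formulas are the literal ones of the paper (no truncation). *)
Definition site := (Z * Z * Z)%type.

Definition V : site := (1, 0, 0).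
Definition Fs : site := (0, 0, 1).
Definition Bs (a : Z) : site := (a + 1, a, 0).
Definition Us (a : Z) : site := (a, a, 1).

(* The combinatorial R: carrier (a,b,c), site (d,e,f) |-> (site', carrier'). *)
Definition Rmap (car s : site) : site * site :=
  let '(a, b, c) := car in
  let '(d, e, f) := s in
  let m1 := Z.min (Z.min (a + b) (a + c)) (b + f) in
  let m2 := Z.min (Z.min (e + c) (d + c)) (d + b) in
  let m3 := Z.min (Z.min (a + e) (d + f)) (e + f) in
  ((d + m1 - m2, e + m1 - m3, f + m2 - m3),
   (a - m1 + m2, b - m1 + m3, c - m2 + m3)).

(* A state: a function Z -> site (equal to V outside a finite set). *)
Definition state := Z -> site.

Fixpoint run (car : site) (S : state) (start : Z) (n : nat) : site :=
  match n with
  | O => car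
  | Datatypes.S n' => run (snd (Rmap car (S start))) S (start + 1) n'
  end.

Definition carrier_at (l : Z) (S : state) (lo i : Z) : site :=
  run (l, 0, 0) S lo (Z.to_nat (i - lo)).

(* T_l applied to S, with the carrier starting at position lo; this is the
   time evolution T_l whenever every site left of lo is vacuum. *)
Definition T (l : Z) (S : state) (lo : Z) : state :=
  fun i => fst (Rmap (carrier_at l S lo i) (S i)).

Definition vacuum_left_of (S : state) (lo : Z) : Prop :=
  forall i, i < lo -> S i = V.

Inductive letter := LF | LB (a : Z) | LU (a : Z).

Definition letter_site (x : letter) : site :=
  match x with LF => Fs | LB a => Bs a | LU a => Us a end.

Definition word_at (A : list letter) (p : Z) : state :=
  fun i => if andb (p <=? i) (i <? p + Z.of_nat (length A))
           then letter_site (nth (Z.to_nat (i - p)) A LF)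
           else V.

Definition Fk (k : nat) : list letter := repeat LF k.

Definition letter_ok (x : letter) : Prop :=
  match x with LF => True | LB a => 1 <= a | LU a => 1 <= a end.

Definition bad_pair (x y : letter) : Prop :=
  match x, y with
  | LF, LF => True
  | LF, LU _ => True
  | _, _ => False
  end.

Definition slow_basic_soliton (A : list letter) : Prop :=
  A <> [] /\ Forall letter_ok A /\
  (forall j, (S j < length A)%nat -> ~ bad_pair (nth j A LF) (nth (S j) A LF)).

Definition maps_to (l : Z) (A : list letter) (p : Z) (A' : list letter) (q : Z) : Prop :=
  forall lo, vacuum_left_of (word_at A p) lo ->
    forall i, T l (word_at A p) lo i = word_at A' q i.

(* Main.v *)
Require Import Defs.
From Stdlib Require Import ZArith List Lia.
Open Scope Z_scope.

Lemma run_succ : forall n car S st,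
  run car S st (Datatypes.S n) = snd (Rmap (run car S st n) (S (st + Z.of_nat n))).
Proof.
  induction n; intros car S st.
  - simpl. rewrite Z.add_0_r. reflexivity.
  - change (run car S st (Datatypes.S (Datatypes.S n)))
      with (run (snd (Rmap car (S st))) S (st + 1) (Datatypes.S n)).
    rewrite IHn. simpl.
    replace (st + 1 + Z.of_nat n) with (st + Z.pos (Pos.of_succ_nat n)) by lia.
    reflexivity.
Qed.

Lemma carrier_step : forall l S lo i, lo <= i ->
  carrier_at l S lo (i + 1) = snd (Rmap (carrier_at l S lo i) (S i)).
Proof.
  intros. unfold carrier_at.
  replace (Z.to_nat (i + 1 - lo)) with (Datatypes.S (Z.to_nat (i - lo))) by lia.
  rewrite run_succ. do 3 f_equal. lia.
Qed.

Lemma carrier_before : forall l S lo i, i <= lo -> carrier_at l S lo i = (l, 0, 0).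
Proof.
  intros. unfold carrier_at. replace (Z.to_nat (i - lo)) with 0%nat by lia. reflexivity.
Qed.

Lemma carrier_inv : forall l S lo (g : Z -> site), g lo = (l, 0, 0) ->
  (forall i, lo <= i -> snd (Rmap (g i) (S i)) = g (i + 1)) ->
  forall i, lo <= i -> carrier_at l S lo i = g i.
Proof.
  intros l S lo g H0 Hs.
  assert (forall n, carrier_at l S lo (lo + Z.of_nat n) = g (lo + Z.of_nat n)).
  { induction n.
    - simpl. rewrite Z.add_0_r, carrier_before by lia. auto.
    - replace (lo + Z.of_nat (Datatypes.S n)) with ((lo + Z.of_nat n) + 1) by lia.
      rewrite carrier_step by lia. rewrite IHn. apply Hs. lia. }
  intros i Hi. replace i with (lo + Z.of_nat (Z.to_nat (i - lo))) by lia. apply H.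
Qed.

Definition addL (l : Z) (s : site) : site := let '(x, y, z) := s in (x + (l - 1), y, z).
Definition osite (o : option letter) : site :=
  match o with None => V | Some x => letter_site x end.
Definition okopt (o : option letter) : Prop :=
  match o with None => True | Some x => letter_ok x end.
Definition badopt (o1 o2 : option letter) : Prop :=
  match o1, o2 with Some x, Some y => bad_pair x y | _, _ => False end.

Lemma pair_step l (hl : 1 < l) ox oy : okopt ox -> okopt oy -> ~ badopt ox oy ->
  Rmap (addL l (osite ox)) (osite oy) = (osite ox, addL l (osite oy)).
Proof.
  destruct ox as [[|a|a]|], oy as [[|b|b]|]; cbn [okopt badopt letter_ok bad_pair osite letter_site]; intros; try tauto;
  unfold Rmap, addL, V, Fs, Bs, Us; cbn -[Z.add Z.sub Z.min Z.opp]; repeat (apply pair_equal_spec; split); lia.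
Qed.

Definition get (A : list letter) (p i : Z) : option letter :=
  if andb (p <=? i) (i <? p + Z.of_nat (length A))
  then Some (nth (Z.to_nat (i - p)) A LF) else None.

Lemma word_get A p i : word_at A p i = osite (get A p i).
Proof. unfold word_at, get. destruct (andb _ _); reflexivity. Qed.

Lemma word_shift A p i : word_at A (p + 1) i = word_at A p (i - 1).
Proof.
  unfold word_at.
  replace (p + 1 <=? i) with (p <=? i - 1).
  2:{ destruct (Z.leb_spec (p+1) i), (Z.leb_spec p (i-1)); auto; lia. }
  replace (i <? p + 1 + Z.of_nat (length A)) with (i - 1 <? p + Z.of_nat (length A)).
  2:{ destruct (Z.ltb_spec (i-1) (p + Z.of_nat (length A))),
        (Z.ltb_spec i (p + 1 + Z.of_nat (length A))); auto; lia. }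
  replace (i - (p + 1)) with (i - 1 - p) by lia. reflexivity.
Qed.

Lemma get_some A p i x : get A p i = Some x ->
  p <= i < p + Z.of_nat (length A) /\ x = nth (Z.to_nat (i - p)) A LF.
Proof.
  unfold get. destruct (Z.leb_spec p i), (Z.ltb_spec i (p + Z.of_nat (length A)));
  simpl; intro Hs; inversion Hs; auto; lia.
Qed.

Lemma get_ok A p i : Forall letter_ok A -> okopt (get A p i).
Proof.
  intro HF. destruct (get A p i) eqn:E; simpl; auto.
  apply get_some in E as [Hr ->]. rewrite Forall_forall in HF. apply HF.
  apply nth_In. lia.
Qed.

Lemma get_notbad A p i : slow_basic_soliton A -> ~ badopt (get A p (i - 1)) (get A p i).
Proof.
  intros [_ [_ Hb]]. destruct (get A p (i-1)) eqn:E1; simpl; auto.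
  destruct (get A p i) eqn:E2; simpl; auto.
  apply get_some in E1 as [Hr1 ->]. apply get_some in E2 as [Hr2 ->].
  replace (Z.to_nat (i - p)) with (Datatypes.S (Z.to_nat (i - 1 - p))) by lia.
  apply Hb. lia.
Qed.

Lemma part2 l (hl : 1 < l) A : slow_basic_soliton A -> forall p, maps_to l A p A (p + 1).
Proof.
  intros HA p lo Hv i.
  assert (HF : Forall letter_ok A) by apply HA.
  set (S := word_at A p) in *.
  assert (Hinv : forall i, lo <= i -> carrier_at l S lo i = addL l (S (i - 1))).
  { apply carrier_inv.
    - rewrite Hv by lia. unfold addL, V. cbn -[Z.add Z.sub]. repeat (apply pair_equal_spec; split); lia.
    - intros j _. unfold S. rewrite !word_get.
      rewrite pair_step; auto using get_ok, get_notbad.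
      replace (j + 1 - 1) with j by lia; reflexivity. }
  unfold T. rewrite word_shift. fold S.
  destruct (Z_lt_le_dec i lo).
  - rewrite carrier_before by lia. rewrite !Hv by lia.
    unfold Rmap, V; cbn -[Z.add Z.sub Z.min Z.opp]; repeat (apply pair_equal_spec; split); lia.
  - rewrite Hinv by lia. unfold S. rewrite !word_get.
    rewrite pair_step; auto using get_ok, get_notbad.
Qed.

Lemma Fk_at k p i : word_at (Fk k) p i =
  if andb (p <=? i) (i <? p + Z.of_nat k) then Fs else V.
Proof.
  unfold word_at, Fk. rewrite repeat_length.
  destruct (andb _ _); auto. rewrite nth_repeat. reflexivity.
Qed.

Lemma part1 l (hl : 1 < l) k : (1 <= k)%nat -> forall p,
  maps_to l (Fk k) p (Fk k) (p + Z.min l (Z.of_nat k)).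
Proof.
  intros Hk p lo Hv i.
  set (K := Z.of_nat k) in *.
  set (s := Z.min l K).
  assert (HK : 1 <= K) by lia.
  set (S := word_at (Fk k) p) in *.
  assert (Hlo : lo <= p).
  { destruct (Z_lt_le_dec p lo) as [h|h]; auto.
    specialize (Hv p h). unfold S in Hv. rewrite Fk_at in Hv; fold K in Hv.
    revert Hv; destruct (Z.leb_spec p p), (Z.ltb_spec p (p + K)); try lia.
    simpl. unfold Fs, V. intro Hc; inversion Hc. }
  set (c := fun j => Z.max 0 (Z.min (Z.min (j - p) s) (p + K + s - j))).
  assert (Hinv : forall i, lo <= i -> carrier_at l S lo i = (l - c i, 0, c i)).
  { apply carrier_inv.
    - unfold c. repeat (apply pair_equal_spec; split); lia.
    - intros j _. unfold S. rewrite Fk_at; fold K. unfold c, s.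
      destruct (Z.leb_spec p j), (Z.ltb_spec j (p + K)); cbn [andb];
      unfold Rmap, Fs, V; cbv beta iota zeta;
      repeat (apply pair_equal_spec; split); lia. }
  unfold T. fold s. rewrite Fk_at; fold K.
  destruct (Z_lt_le_dec i lo).
  - rewrite carrier_before by lia. rewrite !Hv by lia.
    destruct (Z.leb_spec (p + s) i); try lia. cbn [andb].
    unfold Rmap, V; cbv beta iota zeta; repeat (apply pair_equal_spec; split); lia.
  - rewrite Hinv by lia. unfold S. rewrite Fk_at; fold K. unfold c, s.
    destruct (Z.leb_spec p i), (Z.ltb_spec i (p + K)),
      (Z.leb_spec (p + Z.min l K) i), (Z.ltb_spec i (p + Z.min l K + K)); cbn [andb];
      unfold Rmap, Fs, V; cbv beta iota zeta;
      repeat (apply pair_equal_spec; split); lia.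
Qed.

Theorem mainTheorem6 (l : Z) (hl : 1 < l) :
  (forall (k : nat), (1 <= k)%nat -> forall p : Z,
      maps_to l (Fk k) p (Fk k) (p + Z.min l (Z.of_nat k))) /\
  (forall (A : list letter), slow_basic_soliton A -> forall p : Z,
      maps_to l A p A (p + 1)).
Proof.
  split.
  - intros. apply part1; auto.
  - intros. apply part2; auto.
Qed.
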